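(* Consider $R_0(s)=\int_0^{\bar\theta}J(\theta)s(\theta)\,dF(\theta)$. The following are equivalent: (a) $J$ is nondecreasing on $\Theta$; (b) for all nondecreasing $s,\hat s:\Theta\to[0,1]$ with $\hat s\in\mathrm{MPS}(s)$, $R_0(s)\ge R_0(\hat s)$ (offering more positional-good levels, i.e., a finer allocation, always weakly increases revenue); (c) full separation $s=F$ maximizes $R_0$ over $\mathcal S(0)$.
   Context: Let $0<\bar\theta<\infty$, $\Theta=[0,\bar\theta]$, $F$ a cdf on $\Theta$ with continuous, strictly positive density $f$, $dF=f\,d\theta$, and $J(\theta)=\theta-\frac{1-F(\theta)}{f(\theta)}$. For bounded measurable $a,b$ on $\Theta$, write $b\in\mathrm{MPS}(a)$ if $\int_x^{\bar\theta}b\,dF\le\int_x^{\bar\theta}a\,dF$ for all $x\in\Theta$, with equality at $x=0$. $\mathcal S(0)$ is the set of nondecreasing $s:\Theta\to[0,1]$ with $s\in\mathrm{MPS}(F)$ (feasible interim statuses when exclusion is impossible and the lowest level is free). $R_0(s)$ is the seller's revenue in this setting. *)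

(* Defs.v *)
From Stdlib Require Import Reals.
From Coquelicot Require Import Coquelicot.
Open Scope R_scope.

Definition inTheta (tb x : R) : Prop := 0 <= x <= tb.

Definition Jv (F f : R -> R) (t : R) : R := t - (1 - F t) / f t.

(* integral of b against dF = f dtheta over [x, tb] *)
Definition intdF (f b : R -> R) (x tb : R) : R := RInt (fun t => b t * f t) x tb.

Definition MPS (tb : R) (f a b : R -> R) : Prop :=
  (forall x, inTheta tb x -> intdF f b x tb <= intdF f a x tb) /\
  intdF f b 0 tb = intdF f a 0 tb.

Definition nondec01 (tb : R) (s : R -> R) : Prop :=
  (forall x, inTheta tb x -> 0 <= s x <= 1) /\
  (forall x y, 0 <= x -> x <= y -> y <= tb -> s x <= s y).

Definition S0 (tb : R) (F f s : R -> R) : Prop := nondec01 tb s /\ MPS tb f F s.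

Definition Rev0 (tb : R) (F f s : R -> R) : R :=
  RInt (fun t => Jv F f t * s t * f t) 0 tb.

(* Main.v *)
Require Import Defs.
From Stdlib Require Import Reals.
From Stdlib Require Import Lra Lia ZArith.
From Coquelicot Require Import Coquelicot.
Open Scope R_scope.

Fixpoint Qn (L d : R) (N : nat) (v : R) : R :=
  match N with
  | O => 0
  | S N' => Qn L d N' v + (if Rle_dec (L + INR (S N') * d) v then 1 else 0)
  end.

Lemma Qn_S L d N v : Qn L d (S N) v = Qn L d N v + (if Rle_dec (L + INR (S N) * d) v then 1 else 0).
Proof. reflexivity. Qed.

Lemma Qn_bound L d N v : 0 <= Qn L d N v <= INR N.
Proof.
  induction N as [|N IH]; [simpl; lra|]. rewrite Qn_S.
  rewrite S_INR. destruct (Rle_dec _ _); lra.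
Qed.

Lemma Qn_top L d N v : 0 < d -> L + INR N * d <= v -> Qn L d N v = INR N.
Proof.
  intros Hd. induction N as [|N IH]; intros H; [reflexivity|]. rewrite Qn_S.
  rewrite S_INR in *. rewrite IH.
  - destruct (Rle_dec _ _); [lra|]. exfalso; lra.
  - assert ((INR N + 1)*d = INR N * d + d) by ring. lra.
Qed.

Lemma Qn_approx L d N v : 0 < d -> L <= v -> v < L + (INR N + 1) * d ->
  L + d * Qn L d N v <= v < L + d * Qn L d N v + d.
Proof.
  intros Hd. induction N as [|N IH]; intros H1 H2.
  - simpl in H2. simpl. lra.
  - rewrite Qn_S. rewrite S_INR in *. destruct (Rle_dec (L + (INR N + 1) * d) v) as [h|h].
    + rewrite Qn_top; [lra| lra |].
      assert ((INR N + 1)*d = INR N * d + d) by ring. lra.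
    + assert (v < L + (INR N + 1) * d) by lra. specialize (IH H1 H). lra.
Qed.

Definition ind (c : R) (h : R -> R) (t : R) : R := if Rle_dec c (h t) then 1 else 0.

Lemma upset_int (a b c : R) (h g : R -> R) :
  a <= b ->
  (forall x y, a <= x -> x <= y -> y <= b -> h x <= h y) ->
  (forall u v, a <= u -> u <= v -> v <= b -> ex_RInt g u v) ->
  exists x0, a <= x0 <= b /\ ex_RInt (fun t => ind c h t * g t) a b /\
    RInt (fun t => ind c h t * g t) a b = RInt g x0 b.
Proof.
  intros Hab Hh Hg.
  set (E := fun t => t = a \/ (a <= t <= b /\ h t < c)).
  assert (HB : bound E). { exists b. intros t [->|[? _]]; lra. }
  assert (HN : exists t, E t). { exists a. left; reflexivity. }
  destruct (completeness E HB HN) as [x0 [Hub Hlub]].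
  assert (Ha0 : a <= x0) by (apply Hub; left; reflexivity).
  assert (H0b : x0 <= b). { apply Hlub. intros t [->|[? _]]; lra. }
  assert (Hright : forall t, x0 < t <= b -> ind c h t = 1).
  { intros t Ht. unfold ind. destruct (Rle_dec c (h t)) as [|n]; [reflexivity|].
    exfalso. assert (E t) by (right; split; lra). specialize (Hub t H). lra. }
  assert (Hleft : forall t, a < t < x0 -> ind c h t = 0).
  { intros t Ht. unfold ind. destruct (Rle_dec c (h t)) as [r|]; [|reflexivity].
    exfalso. assert (x0 <= t).
    { apply Hlub. intros e [->|[He1 He2]]; [lra|].
      destruct (Rle_dec e t) as [|n]; [assumption|].
      assert (h t <= h e) by (apply Hh; lra). lra. }
    lra. }
  assert (I1 : ex_RInt (fun t => ind c h t * g t) a x0).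
  { apply ex_RInt_ext with (fun _ => 0). 
    - intros t Ht. rewrite Rmin_left in Ht by lra. rewrite Rmax_right in Ht by lra.
      rewrite Hleft by lra. now rewrite Rmult_0_l.
    - apply ex_RInt_const. }
  assert (I2 : ex_RInt (fun t => ind c h t * g t) x0 b).
  { apply ex_RInt_ext with g.
    - intros t Ht. rewrite Rmin_left in Ht by lra. rewrite Rmax_right in Ht by lra.
      rewrite Hright by lra. now rewrite Rmult_1_l.
    - apply Hg; lra. }
  exists x0. split; [lra|]. split.
  - apply ex_RInt_Chasles with x0; assumption.
  - rewrite <- (RInt_Chasles _ a x0 b I1 I2).
    rewrite (RInt_ext _ (fun _ => 0) a x0).
    2:{ intros t Ht. rewrite Rmin_left in Ht by lra. rewrite Rmax_right in Ht by lra.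
      rewrite Hleft by lra. now rewrite Rmult_0_l. }
    rewrite RInt_const.
    rewrite (RInt_ext _ g x0 b).
    2:{ intros t Ht. rewrite Rmin_left in Ht by lra. rewrite Rmax_right in Ht by lra.
      rewrite Hright by lra. now rewrite Rmult_1_l. }

    unfold scal, plus; simpl. unfold mult; simpl.
    rewrite Rmult_0_r. rewrite Rplus_0_l. reflexivity.
Qed.

Lemma ex_RInt_plusR (f g : R -> R) (a b : R) : ex_RInt f a b -> ex_RInt g a b -> ex_RInt (fun x => f x + g x) a b.
Proof. intros H1 H2; exact (ex_RInt_plus _ _ _ _ H1 H2). Qed.
Lemma ex_RInt_minusR (f g : R -> R) (a b : R) : ex_RInt f a b -> ex_RInt g a b -> ex_RInt (fun x => f x - g x) a b.
Proof. intros H1 H2; exact (ex_RInt_minus _ _ _ _ H1 H2). Qed.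
Lemma ex_RInt_scalR (f : R -> R) (k a b : R) : ex_RInt f a b -> ex_RInt (fun x => k * f x) a b.
Proof. intros H1; exact (ex_RInt_scal _ _ _ k H1). Qed.
Lemma RInt_plusR (f g : R -> R) (a b : R) : ex_RInt f a b -> ex_RInt g a b ->
  RInt (fun x => f x + g x) a b = RInt f a b + RInt g a b.
Proof. intros H1 H2; exact (RInt_plus _ _ _ _ H1 H2). Qed.
Lemma RInt_minusR (f g : R -> R) (a b : R) : ex_RInt f a b -> ex_RInt g a b ->
  RInt (fun x => f x - g x) a b = RInt f a b - RInt g a b.
Proof. intros H1 H2; exact (RInt_minus _ _ _ _ H1 H2). Qed.
Lemma RInt_scalR (f : R -> R) (k a b : R) : ex_RInt f a b -> RInt (fun x => k * f x) a b = k * RInt f a b.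
Proof. intros H1; exact (RInt_scal _ _ _ k H1). Qed.
Lemma RInt_constR (a b c : R) : RInt (fun _ => c) a b = (b - a) * c.
Proof. exact (RInt_const a b c). Qed.
Lemma RInt_ChaslesR (f : R -> R) (a b c : R) : ex_RInt f a b -> ex_RInt f b c -> RInt f a b + RInt f b c = RInt f a c.
Proof. intros H1 H2; exact (RInt_Chasles _ _ _ _ H1 H2). Qed.
Lemma RInt_extR (f g : R -> R) (a b : R) : (forall x, Rmin a b < x < Rmax a b -> f x = g x) -> RInt f a b = RInt g a b.
Proof. intros H1; exact (RInt_ext _ _ _ _ H1). Qed.
Lemma ex_RInt_extR (f g : R -> R) (a b : R) : (forall x, Rmin a b < x < Rmax a b -> f x = g x) -> ex_RInt f a b -> ex_RInt g a b.
Proof. intros H1 H2; exact (ex_RInt_ext _ _ _ _ H1 H2). Qed.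

Lemma Qn_int L d N a b h g :
  a <= b ->
  (forall x y, a <= x -> x <= y -> y <= b -> h x <= h y) ->
  (forall u v, a <= u -> u <= v -> v <= b -> ex_RInt g u v) ->
  ex_RInt (fun t => Qn L d N (h t) * g t) a b /\
  ((forall x0, a <= x0 <= b -> RInt g x0 b <= 0) -> RInt (fun t => Qn L d N (h t) * g t) a b <= 0).
Proof.
  intros Hab Hh Hg. induction N as [|N [IH1 IH2]].
  - simpl. split.
    + apply ex_RInt_extR with (fun _ => 0). { intros; ring. } exact (ex_RInt_const a b (0:R)).
    + intros _. rewrite (RInt_extR _ (fun _ => 0)). 2:{ intros; ring. }
      rewrite RInt_constR. lra.
  - destruct (upset_int a b (L + INR (S N) * d) h g Hab Hh Hg) as [x0 [Hx0 [E1 E2]]].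
    assert (Heq : forall t, Qn L d (S N) (h t) * g t = Qn L d N (h t) * g t + ind (L + INR (S N) * d) h t * g t).
    { intros t. rewrite Qn_S. unfold ind. ring. }
    split.
    + apply ex_RInt_extR with (fun t => Qn L d N (h t) * g t + ind (L + INR (S N) * d) h t * g t).
      { intros; rewrite Heq; reflexivity. }
      apply ex_RInt_plusR; assumption.
    + intros Hneg. rewrite (RInt_extR _ (fun t => Qn L d N (h t) * g t + ind (L + INR (S N) * d) h t * g t)).
      2:{ intros; rewrite Heq; reflexivity. }
      rewrite RInt_plusR by assumption. rewrite E2. specialize (IH2 Hneg). specialize (Hneg x0 Hx0). lra.
Qed.

Lemma int_mon (a b : R) (s g : R -> R) :
  a <= b ->
  (forall t, a <= t <= b -> 0 <= s t <= 1) ->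
  (forall x y, a <= x -> x <= y -> y <= b -> s x <= s y) ->
  (forall u v, a <= u -> u <= v -> v <= b -> ex_RInt g u v) ->
  ex_RInt (fun t => s t * g t) a b.
Proof.
  intros Hab Hs01 Hs Hg.
  destruct (ex_RInt_ub g a b (Hg a b (Rle_refl a) Hab (Rle_refl b))) as [M HM].
  rewrite Rmin_left in HM by lra. rewrite Rmax_right in HM by lra.
  assert (HM0 : 0 <= M). { specialize (HM a). assert (norm (g a) <= M) by (apply HM; lra).
    assert (0 <= norm (g a)) by apply norm_ge_0. lra. }
  set (dn := fun n : nat => / INR (S n)).
  assert (Hdn : forall n, 0 < dn n). { intros n. unfold dn. apply Rinv_0_lt_compat. apply lt_0_INR. lia. }
  set (fn := fun (n : nat) (t : R) =>
    if Rle_dec a t then (if Rle_dec t b then dn n * Qn 0 (dn n) (S n) (s t) * g t else s t * g t)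
    else s t * g t).
  assert (Hint : forall n, is_RInt (fn n) a b (RInt (fn n) a b)).
  { intros n. apply (RInt_correct (V := R_CompleteNormedModule)).
    apply ex_RInt_extR with (fun t => dn n * (Qn 0 (dn n) (S n) (s t) * g t)).
    - intros t Ht. rewrite Rmin_left in Ht by lra. rewrite Rmax_right in Ht by lra.
      unfold fn. destruct (Rle_dec a t); [|lra]. destruct (Rle_dec t b); [|lra]. ring.
    - apply ex_RInt_scalR. apply Qn_int; assumption. }
  assert (Hlim : filterlim fn eventually (@locally (fct_UniformSpace R R_UniformSpace) (fun t => s t * g t))).
  { apply filterlim_locally. intros eps.
    destruct (archimed (M / eps)) as [Harch _].
    exists (Z.to_nat (up (M / eps))). intros n Hn.
    unfold ball; simpl. unfold fct_ball. intros t. unfold ball; simpl. unfold AbsRing_ball.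
    unfold abs, minus, plus, opp; simpl.
    unfold fn. destruct (Rle_dec a t) as [h1|h1]; [destruct (Rle_dec t b) as [h2|h2]|].
    2,3: rewrite Rplus_opp_r, Rabs_R0; apply cond_pos.
    assert (Happ := Qn_approx 0 (dn n) (S n) (s t) (Hdn n)).
    assert (Hst := Hs01 t (conj h1 h2)).
    assert (HS : (INR (S n) + 1) * dn n > 1).
    { unfold dn. rewrite Rmult_plus_distr_r. rewrite Rinv_r. 2:{ apply not_0_INR; lia. }
      assert (0 < / INR (S n)) by (apply Rinv_0_lt_compat, lt_0_INR; lia). lra. }
    specialize (Happ (proj1 Hst) ltac:(lra)).
    set (q := Qn 0 (dn n) (S n) (s t)) in *.
    replace (dn n * q * g t + - (s t * g t)) with ((dn n * q - s t) * g t) by ring.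
    rewrite Rabs_mult.
    assert (Hq : Rabs (dn n * q - s t) <= dn n) by (apply Rabs_le; lra).
    assert (Hgt : Rabs (g t) <= M) by (apply HM; lra).
    assert (Hd : dn n * M < eps).
    { unfold dn. 
      assert (HnR : INR (Z.to_nat (up (M / eps))) <= INR n) by (apply le_INR; lia).
      assert (Hup : M / eps < INR (Z.to_nat (up (M / eps)))).
      { rewrite INR_IZR_INZ. rewrite Z2Nat.id. lra.
        apply le_IZR. assert (0 <= M / eps). { apply Rdiv_le_0_compat; [lra| apply cond_pos]. } lra. }
      assert (HSn : INR (S n) = INR n + 1) by apply S_INR.
      assert (Hpe := cond_pos eps).
      apply Rmult_lt_reg_l with (INR (S n)). { apply lt_0_INR; lia. }
      rewrite <- Rmult_assoc, Rinv_r by (apply not_0_INR; lia).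
      assert (M < eps * (M / eps + 1)).
      { unfold Rdiv. rewrite Rmult_plus_distr_l. rewrite <- Rmult_assoc. rewrite (Rmult_comm eps M).
        rewrite Rmult_assoc, Rinv_r by lra. lra. }
      nra. }
    assert (0 <= Rabs (g t)) by apply Rabs_pos.
    assert (0 <= Rabs (dn n * q - s t)) by apply Rabs_pos.
    nra. }
  destruct (filterlim_RInt fn a b eventually eventually_filter (fun t => s t * g t)
              (fun n => RInt (fn n) a b) Hint Hlim) as [If [_ HIf]].
  exists If. exact HIf.
Qed.

Definition Hyp (tb : R) (F f : R -> R) : Prop :=
  0 < tb /\
  (forall x, inTheta tb x -> filterlim f (within (inTheta tb) (locally x)) (locally (f x))) /\
  (forall x, inTheta tb x -> 0 < f x) /\
  (forall x, inTheta tb x -> F x = RInt f 0 x) /\ F tb = 1.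

Definition cl (tb t : R) : R := Rmax 0 (Rmin tb t).
Definition ft (tb : R) (f : R -> R) (t : R) : R := f (cl tb t).
Definition Ft (tb : R) (f : R -> R) (t : R) : R := RInt (ft tb f) 0 t.

Lemma cl_in tb t : 0 < tb -> inTheta tb (cl tb t).
Proof. intros. unfold cl, inTheta, Rmax, Rmin. repeat destruct Rle_dec; lra. Qed.

Lemma cl_id tb t : inTheta tb t -> cl tb t = t.
Proof. unfold cl, inTheta, Rmax, Rmin. intros. repeat destruct Rle_dec; lra. Qed.

Lemma cl_lip tb t x : Rabs (cl tb t - cl tb x) <= Rabs (t - x).
Proof. unfold cl, Rmax, Rmin. repeat destruct Rle_dec; unfold Rabs; repeat destruct Rcase_abs; lra. Qed.

Lemma ft_cont tb F f : Hyp tb F f -> forall x, continuous (ft tb f) x.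
Proof.
  intros [Htb [Hc _]] x. unfold continuous, ft.
  apply filterlim_comp with (G := within (inTheta tb) (locally (cl tb x))).
  - intros P [eps HP]. exists eps. intros t Ht. apply HP.
    + unfold ball in *; simpl in *. unfold AbsRing_ball, abs, minus, plus, opp in *; simpl in *.
      eapply Rle_lt_trans; [apply cl_lip|]. exact Ht.
    + apply cl_in; assumption.
  - apply Hc. apply cl_in; assumption.
Qed.

Lemma ft_pos tb F f : Hyp tb F f -> forall x, 0 < ft tb f x.
Proof. intros [Htb [_ [Hp _]]] x. apply Hp, cl_in, Htb. Qed.

Lemma ft_int tb F f : Hyp tb F f -> forall u v, ex_RInt (ft tb f) u v.
Proof. intros H u v. apply (ex_RInt_continuous (V := R_CompleteNormedModule)). intros; apply (ft_cont tb F f H). Qed.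

Lemma Ft_deriv tb F f : Hyp tb F f -> forall x, is_derive (Ft tb f) x (ft tb f x).
Proof.
  intros H x. apply (is_derive_RInt (V := R_NormedModule) (ft tb f) (Ft tb f) 0 x).
  - apply filter_forall. intros b0. unfold Ft. apply (RInt_correct (V := R_CompleteNormedModule)).
    apply (ft_int tb F f H).
  - apply (ft_cont tb F f H).
Qed.

Lemma Ft_cont tb F f : Hyp tb F f -> forall x, continuous (Ft tb f) x.
Proof. intros H x. apply (ex_derive_continuous (K:=R_AbsRing) (V:=R_NormedModule) (Ft tb f) x). eexists. apply (Ft_deriv tb F f H). Qed.

Lemma f_eq tb F f : Hyp tb F f -> forall t, inTheta tb t -> f t = ft tb f t.
Proof. intros H t Ht. unfold ft. rewrite cl_id; auto. Qed.

Lemma F_eq tb F f : Hyp tb F f -> forall t, inTheta tb t -> F t = Ft tb f t.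
Proof.
  intros H t Ht. destruct H as (Htb & Hc & Hp & HF & HF1). rewrite HF by assumption.
  unfold Ft. apply RInt_extR. intros x Hx. unfold ft. rewrite cl_id. reflexivity.
  unfold inTheta in *. destruct (Rle_dec 0 t).
  - rewrite Rmin_left, Rmax_right in Hx by lra. lra.
  - lra.
Qed.

Lemma f_int tb F f : Hyp tb F f -> forall u v, 0 <= u -> u <= v -> v <= tb -> ex_RInt f u v.
Proof.
  intros H u v H1 H2 H3. apply ex_RInt_extR with (ft tb f).
  - intros x Hx. rewrite Rmin_left, Rmax_right in Hx by lra. symmetry. apply (f_eq tb F f H). unfold inTheta; lra.
  - apply (ft_int tb F f H).
Qed.

Lemma Ft_diff tb F f : Hyp tb F f -> forall u v, Ft tb f v - Ft tb f u = RInt (ft tb f) u v.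
Proof.
  intros H u v. unfold Ft. rewrite <- (RInt_ChaslesR (ft tb f) 0 u v) by apply (ft_int tb F f H). ring.
Qed.

Lemma Ft_strict tb F f : Hyp tb F f -> forall u v, u < v -> Ft tb f u < Ft tb f v.
Proof.
  intros H u v Huv. assert (0 < RInt (ft tb f) u v).
  { apply RInt_gt_0; [assumption| |]. intros; apply (ft_pos tb F f H). intros; apply (ft_cont tb F f H). }
  rewrite <- (Ft_diff tb F f H) in H0. lra.
Qed.

Lemma F_mono tb F f : Hyp tb F f -> forall u v, 0 <= u -> u <= v -> v <= tb -> F u <= F v.
Proof.
  intros H u v H1 H2 H3. rewrite (F_eq tb F f H u), (F_eq tb F f H v) by (unfold inTheta; lra).
  destruct (Rle_lt_or_eq_dec u v H2) as [h| ->]; [|lra]. left. apply (Ft_strict tb F f H); assumption.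
Qed.

Lemma F_01 tb F f : Hyp tb F f -> forall t, inTheta tb t -> 0 <= F t <= 1.
Proof.
  intros H t Ht. assert (H' := H). destruct H' as (Htb & Hc & Hp & HF & HF1).
  assert (F 0 = 0). { rewrite HF by (unfold inTheta; lra). apply (RInt_point (V:=R_CompleteNormedModule)). }
  unfold inTheta in Ht.
  split.
  - rewrite <- H0. apply (F_mono tb F f H); lra.
  - rewrite <- HF1. apply (F_mono tb F f H); lra.
Qed.

Definition Gt (tb : R) (f : R -> R) (t : R) : R := t * ft tb f t - (1 - Ft tb f t).
Definition Jt (tb : R) (f : R -> R) (t : R) : R := t - (1 - Ft tb f t) / ft tb f t.

Lemma Gt_cont tb F f : Hyp tb F f -> forall x, continuous (Gt tb f) x.
Proof.
  intros H x. unfold Gt. apply continuity_pt_filterlim.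
  apply continuity_pt_minus. apply continuity_pt_mult. apply continuity_pt_id.
  apply continuity_pt_filterlim, (ft_cont tb F f H).
  apply continuity_pt_minus. apply continuity_pt_const. intros ? ?; reflexivity.
  apply continuity_pt_filterlim, (Ft_cont tb F f H).
Qed.

Lemma Jt_cont tb F f : Hyp tb F f -> forall x, continuous (Jt tb f) x.
Proof.
  intros H x. unfold Jt. apply continuity_pt_filterlim.
  apply continuity_pt_minus. apply continuity_pt_id.
  apply continuity_pt_div.
  apply continuity_pt_minus. apply continuity_pt_const. intros ? ?; reflexivity.
  apply continuity_pt_filterlim, (Ft_cont tb F f H).
  apply continuity_pt_filterlim, (ft_cont tb F f H).
  apply Rgt_not_eq, (ft_pos tb F f H).
Qed.

Lemma Gt_int tb F f : Hyp tb F f -> forall u v, ex_RInt (Gt tb f) u v.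
Proof. intros H u v. apply (ex_RInt_continuous (V := R_CompleteNormedModule)). intros; apply (Gt_cont tb F f H). Qed.

Lemma J_eq tb F f : Hyp tb F f -> forall t, inTheta tb t -> Jv F f t = Jt tb f t.
Proof. intros H t Ht. unfold Jv, Jt. rewrite (F_eq tb F f H t Ht), (f_eq tb F f H t Ht). reflexivity. Qed.

Lemma JG_eq tb F f : Hyp tb F f -> forall t, inTheta tb t -> Jv F f t * f t = Gt tb f t.
Proof.
  intros H t Ht. unfold Jv, Gt. rewrite (F_eq tb F f H t Ht), (f_eq tb F f H t Ht).
  assert (ft tb f t <> 0) by (apply Rgt_not_eq, (ft_pos tb F f H)). field. assumption.
Qed.

Lemma exists_nat_gt (x : R) : exists N : nat, x < INR N.
Proof.
  destruct (archimed x) as [H1 _]. exists (Z.to_nat (up x)).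
  destruct (Z_le_gt_dec 0 (up x)) as [h|h].
  - rewrite INR_IZR_INZ, Z2Nat.id by assumption. assumption.
  - assert (0 <= INR (Z.to_nat (up x))) by apply pos_INR. apply Z.gt_lt, IZR_lt in h. simpl in h. lra.
Qed.

Lemma le_eps (X : R) : (forall d, 0 < d -> X <= d) -> X <= 0.
Proof. intros H. destruct (Rle_dec X 0) as [|n]; [assumption|]. specialize (H (X/2)). lra. Qed.

Lemma nondec_sub tb s u v : nondec01 tb s -> 0 <= u -> u <= v -> v <= tb ->
  (forall t, u <= t <= v -> 0 <= s t <= 1) /\ (forall x y, u <= x -> x <= y -> y <= v -> s x <= s y).
Proof.
  intros [H1 H2] Hu Huv Hv. split.
  - intros t Ht. apply H1. unfold inTheta; lra.
  - intros x y Hx Hxy Hy. apply H2; lra.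
Qed.

Lemma sf_int tb F f s : Hyp tb F f -> nondec01 tb s ->
  forall u v, 0 <= u -> u <= v -> v <= tb -> ex_RInt (fun t => s t * f t) u v.
Proof.
  intros H Hs u v Hu Huv Hv. destruct (nondec_sub tb s u v Hs Hu Huv Hv) as [A B].
  apply int_mon; try assumption.
  intros u' v' ? ? ?. apply (f_int tb F f H); lra.
Qed.

Lemma sG_int tb F f s : Hyp tb F f -> nondec01 tb s ->
  forall u v, 0 <= u -> u <= v -> v <= tb -> ex_RInt (fun t => s t * Gt tb f t) u v.
Proof.
  intros H Hs u v Hu Huv Hv. destruct (nondec_sub tb s u v Hs Hu Huv Hv) as [A B].
  apply int_mon; try assumption.
  intros u' v' ? ? ?. apply (Gt_int tb F f H).
Qed.

Lemma Rev0_eq tb F f s : Hyp tb F f -> Rev0 tb F f s = RInt (fun t => s t * Gt tb f t) 0 tb.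
Proof.
  intros H. unfold Rev0. apply RInt_extR. intros t Ht.
  assert (Htb : 0 < tb) by apply H.
  rewrite Rmin_left, Rmax_right in Ht by lra.
  rewrite <- (JG_eq tb F f H t) by (unfold inTheta; lra). ring.
Qed.

Lemma AB tb F f (H : Hyp tb F f)
  (HJ : forall x y, 0 <= x -> x <= y -> y <= tb -> Jv F f x <= Jv F f y)
  s sh (Hs : nondec01 tb s) (Hsh : nondec01 tb sh) (HM : MPS tb f s sh) :
  Rev0 tb F f s >= Rev0 tb F f sh.
Proof.
  assert (H' := H). destruct H' as (Htb & Hc & Hp & HF & HF1).
  rewrite (Rev0_eq tb F f s H), (Rev0_eq tb F f sh H).
  set (D := fun t => sh t * f t - s t * f t).
  assert (Dint : forall u v, 0 <= u -> u <= v -> v <= tb -> ex_RInt D u v).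
  { intros u v ? ? ?. apply ex_RInt_minusR; apply (sf_int tb F f); assumption. }
  assert (Dval : forall u, 0 <= u <= tb -> RInt D u tb = intdF f sh u tb - intdF f s u tb).
  { intros u Hu. unfold intdF, D. apply RInt_minusR; apply (sf_int tb F f); (assumption || lra). }
  destruct HM as [HM1 HM2].
  set (K := Jv F f).
  set (KD := fun t => K t * D t).
  assert (KDeq : forall t, 0 < t < tb -> KD t = sh t * Gt tb f t - s t * Gt tb f t).
  { intros t Ht. unfold KD, D, K. rewrite <- (JG_eq tb F f H t) by (unfold inTheta; lra). ring. }
  assert (Ish := sG_int tb F f sh H Hsh 0 tb (Rle_refl 0) (Rlt_le _ _ Htb) (Rle_refl tb)).
  assert (Is := sG_int tb F f s H Hs 0 tb (Rle_refl 0) (Rlt_le _ _ Htb) (Rle_refl tb)).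
  assert (KDint : ex_RInt KD 0 tb).
  { apply ex_RInt_extR with (fun t => sh t * Gt tb f t - s t * Gt tb f t).
    - intros t Ht. rewrite Rmin_left, Rmax_right in Ht by lra. symmetry; apply KDeq; lra.
    - apply ex_RInt_minusR; assumption. }
  assert (KDval : RInt KD 0 tb = RInt (fun t => sh t * Gt tb f t) 0 tb - RInt (fun t => s t * Gt tb f t) 0 tb).
  { rewrite <- RInt_minusR by assumption. apply RInt_extR. intros t Ht.
    rewrite Rmin_left, Rmax_right in Ht by lra. apply KDeq; lra. }
  cut (RInt KD 0 tb <= 0). { lra. }
  apply le_eps. intros d Hd.
  set (L := K 0).
  destruct (exists_nat_gt ((K tb - L) / d)) as [N HN].
  assert (HKN : K tb < L + (INR N + 1) * d).
  { assert (K tb - L < INR N * d).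
    { apply Rmult_lt_reg_r with (/ d). apply Rinv_0_lt_compat; lra.
      rewrite Rmult_assoc, Rinv_r, Rmult_1_r by lra. exact HN. }
    lra. }
  set (Q := fun t => Qn L d N (K t)).
  destruct (Qn_int L d N 0 tb K D (Rlt_le _ _ Htb) HJ Dint) as [QDint QDneg].
  assert (QDle : RInt (fun t => Qn L d N (K t) * D t) 0 tb <= 0).
  { apply QDneg. intros x0 Hx0. rewrite Dval by lra. specialize (HM1 x0 ltac:(unfold inTheta; lra)). lra. }
  assert (Dz : RInt D 0 tb = 0). { rewrite Dval by lra. lra. }
  set (R3 := fun t => KD t - L * D t - d * (Qn L d N (K t) * D t)).
  assert (I1 : ex_RInt (fun t => L * D t) 0 tb) by (apply ex_RInt_scalR, Dint; lra).
  assert (I2 : ex_RInt (fun t => d * (Qn L d N (K t) * D t)) 0 tb) by (apply ex_RInt_scalR; assumption).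
  assert (I12 : ex_RInt (fun t => KD t - L * D t) 0 tb) by (apply ex_RInt_minusR; assumption).
  assert (R3int : ex_RInt R3 0 tb) by (unfold R3; apply ex_RInt_minusR; assumption).
  assert (Hdecomp : @eq R (RInt KD 0 tb) (L * RInt D 0 tb + d * RInt (fun t => Qn L d N (K t) * D t) 0 tb + RInt R3 0 tb)).
  { unfold R3. rewrite (RInt_minusR (fun t => KD t - L * D t)) by assumption.
    rewrite (RInt_minusR KD) by assumption. rewrite !RInt_scalR by (assumption || (apply Dint; lra)). repeat match goal with |- context [RInt ?g ?a ?b] => let x := fresh "x" in pose (x := (RInt g a b : R)); change (RInt g a b) with x; clearbody x end; ring. }
  assert (R3le : RInt R3 0 tb <= RInt (fun t => d * f t) 0 tb).
  { apply RInt_le; [lra| assumption | apply ex_RInt_scalR, (f_int tb F f H); lra |].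
    intros t Ht. unfold R3, KD, D.
    assert (HKt : L <= K t <= K tb) by (split; apply HJ; lra).
    destruct (Qn_approx L d N (K t) Hd (proj1 HKt) ltac:(lra)) as [A1 A2].
    assert (Hft : 0 < f t) by (apply Hp; unfold inTheta; lra).
    destruct Hs as [Hs01 _]. destruct Hsh as [Hsh01 _].
    assert (hs := Hs01 t ltac:(unfold inTheta; lra)). assert (hsh := Hsh01 t ltac:(unfold inTheta; lra)).
    set (e := K t - L - d * Qn L d N (K t)).
    replace (K t * (sh t * f t - s t * f t) - L * (sh t * f t - s t * f t) -
       d * (Qn L d N (K t) * (sh t * f t - s t * f t))) with (e * (sh t - s t) * f t) by (unfold e; ring).
    assert (0 <= e < d) by (unfold e; lra).
    assert (e * (sh t - s t) <= d).
    { destruct (Rle_dec 0 (sh t - s t)); nra. }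
    nra. }
  rewrite RInt_scalR in R3le by (apply (f_int tb F f H); lra).
  rewrite <- HF, HF1 in R3le by (unfold inTheta; lra).
  rewrite Hdecomp, Dz. nra.
Qed.

Ltac rint_ring := repeat match goal with |- context [RInt ?g ?a ?b] =>
  let x := fresh "x" in pose (x := (RInt g a b : R)); change (RInt g a b) with x; clearbody x end; ring.

Lemma cont_eps (g : R -> R) x : continuous g x -> forall eps, 0 < eps ->
  exists r, 0 < r /\ forall t, Rabs (t - x) < r -> Rabs (g t - g x) < eps.
Proof.
  intros Hc eps He. 
  assert (Hl := proj1 (filterlim_locally g (g x)) Hc (mkposreal eps He)).
  destruct Hl as [r Hr]. exists r. split; [apply cond_pos|].
  intros t Ht. specialize (Hr t Ht). unfold ball in Hr; simpl in Hr.
  unfold AbsRing_ball, abs, minus, plus, opp in Hr; simpl in Hr. exact Hr.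
Qed.

Definition pl (a m c : R) (F : R -> R) (t : R) : R :=
  if Rle_dec a t then (if Rle_dec t m then c else F t) else F t.

Lemma pl_nondec tb F f a c m : Hyp tb F f -> 0 <= a -> a <= c -> c <= m -> m <= tb ->
  nondec01 tb (pl a m (F c) F).
Proof.
  intros H Ha Hac Hcm Hm. split.
  - intros t Ht. unfold pl. repeat destruct Rle_dec; apply (F_01 tb F f H); unfold inTheta in *; lra.
  - intros x y Hx Hxy Hy. unfold pl. repeat destruct Rle_dec; try lra; apply (F_mono tb F f H); lra.
Qed.

Lemma F_nondec tb F f : Hyp tb F f -> nondec01 tb F.
Proof.
  intros H. split.
  - apply (F_01 tb F f H).
  - apply (F_mono tb F f H).
Qed.

Lemma zero_int (g : R -> R) u v : u <= v -> (forall t, u < t < v -> g t = 0) -> RInt g u v = 0.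
Proof.
  intros Huv Hz. rewrite (RInt_extR g (fun _ => 0)). rewrite RInt_constR. apply Rmult_0_r.
  intros t Ht. rewrite Rmin_left, Rmax_right in Ht by lra. apply Hz; lra.
Qed.

Lemma int_le_const (g : R -> R) (k : R) u v : u <= v -> ex_RInt g u v ->
  (forall t, u < t < v -> g t <= k) -> RInt g u v <= (v - u) * k.
Proof.
  intros Huv Hg Hk. rewrite <- RInt_constR. apply RInt_le; try assumption.
  exact (ex_RInt_const u v k).
Qed.

Lemma CA tb F f (H : Hyp tb F f)
  (HC : forall s, S0 tb F f s -> Rev0 tb F f s <= Rev0 tb F f F) :
  forall x y, 0 <= x -> x <= y -> y <= tb -> Jv F f x <= Jv F f y.
Proof.
  assert (H' := H). destruct H' as (Htb & Hc & Hp & HF & HF1).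
  intros x y Hx Hxy Hy. destruct (Rle_dec (Jv F f x) (Jv F f y)) as [|Hn]; [assumption|exfalso].
  assert (Hxy' : x < y). { destruct (Rle_lt_or_eq_dec x y Hxy) as [|<-]; [assumption|lra]. }
  set (eta := (Jv F f x - Jv F f y) / 3).
  assert (Heta : 0 < eta) by (unfold eta; lra).
  destruct (cont_eps (Jt tb f) x (Jt_cont tb F f H x) eta Heta) as [r1 [Hr1 Hx1]].
  destruct (cont_eps (Jt tb f) y (Jt_cont tb F f H y) eta Heta) as [r2 [Hr2 Hy2]].
  set (r := Rmin (Rmin r1 r2) ((y - x) / 2) / 2).
  assert (Hr : 0 < r /\ r < r1 /\ r < r2 /\ 2 * r < y - x).
  { unfold r. repeat split; unfold Rmin; repeat destruct Rle_dec; lra. }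
  destruct Hr as (Hr0 & Hrr1 & Hrr2 & Hrxy).
  set (a := x). set (m := x + r). set (m' := y - r). set (d := y).
  assert (Ja : forall t, a <= t <= m -> Jv F f x - eta <= Jv F f t).
  { intros t Ht. rewrite (J_eq tb F f H t) by (unfold inTheta, a, m in *; lra).
    rewrite (J_eq tb F f H x) by (unfold inTheta; lra).
    assert (Rabs (Jt tb f t - Jt tb f x) < eta).
    { apply Hx1. unfold a, m in *. rewrite Rabs_right by lra. lra. }
    apply Rabs_def2 in H0. lra. }
  assert (Jd : forall t, m' <= t <= d -> Jv F f t <= Jv F f y + eta).
  { intros t Ht. rewrite (J_eq tb F f H t) by (unfold inTheta, d, m' in *; lra).
    rewrite (J_eq tb F f H y) by (unfold inTheta; lra).
    assert (Rabs (Jt tb f t - Jt tb f y) < eta).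
    { apply Hy2. unfold d, m' in *. rewrite Rabs_left1 by lra. lra. }
    apply Rabs_def2 in H0. lra. }
  assert (Ham : a < m) by (unfold a, m; lra).
  assert (Hmm : m < m') by (unfold m, m'; lra).
  assert (Hmd : m' < d) by (unfold m', d; lra).
  assert (Ha0 : 0 <= a) by (unfold a; lra).
  assert (Hdt : d <= tb) by (unfold d; lra).
  set (s1 := pl a m (F m) F). set (s2 := pl m' d (F m') F).
  assert (Ns1 : nondec01 tb s1) by (unfold s1; apply (pl_nondec tb F f _ _ _ H); lra).
  assert (Ns2 : nondec01 tb s2) by (unfold s2; apply (pl_nondec tb F f _ _ _ H); lra).
  assert (NF : nondec01 tb F) by apply (F_nondec tb F f H).
  set (g1 := fun t => s1 t * f t - F t * f t).
  set (g2 := fun t => s2 t * f t - F t * f t).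
  assert (g1int : forall u v, 0 <= u -> u <= v -> v <= tb -> ex_RInt g1 u v).
  { intros. apply ex_RInt_minusR; apply (sf_int tb F f); assumption. }
  assert (g2int : forall u v, 0 <= u -> u <= v -> v <= tb -> ex_RInt g2 u v).
  { intros. apply ex_RInt_minusR; apply (sf_int tb F f); assumption. }
  assert (g1out : forall t, (t < a \/ m < t) -> g1 t = 0).
  { intros t Ht. unfold g1, s1, pl. repeat destruct Rle_dec; try ring; lra. }
  assert (g2out : forall t, (t < m' \/ d < t) -> g2 t = 0).
  { intros t Ht. unfold g2, s2, pl. repeat destruct Rle_dec; try ring; lra. }
  assert (g1in : forall t, a <= t <= m -> g1 t = (F m - F t) * f t).
  { intros t Ht. unfold g1, s1, pl. repeat destruct Rle_dec; try ring; lra. }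
  assert (g2in : forall t, m' <= t <= d -> g2 t = (F m' - F t) * f t).
  { intros t Ht. unfold g2, s2, pl. repeat destruct Rle_dec; try ring; lra. }
  assert (g1pos : forall t, 0 <= t <= tb -> 0 <= g1 t).
  { intros t Ht. destruct (Rlt_dec t a); [rewrite g1out by lra; lra|].
    destruct (Rlt_dec m t); [rewrite g1out by lra; lra|].
    rewrite g1in by lra. apply Rmult_le_pos.
    - assert (F t <= F m) by (apply (F_mono tb F f H); unfold m in *; lra). lra.
    - left; apply Hp; unfold inTheta; lra. }
  assert (g2neg : forall t, 0 <= t <= tb -> g2 t <= 0).
  { intros t Ht. destruct (Rlt_dec t m'); [rewrite g2out by lra; lra|].
    destruct (Rlt_dec d t); [rewrite g2out by lra; lra|].
    rewrite g2in by lra. 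
    assert (F m' <= F t) by (apply (F_mono tb F f H); unfold m', d in *; lra).
    assert (0 < f t) by (apply Hp; unfold inTheta; lra). nra. }
  set (A := RInt g1 0 tb). set (B := - RInt g2 0 tb).
  assert (HA : A = RInt g1 a m).
  { unfold A. rewrite <- (RInt_ChaslesR g1 0 a tb) by (apply g1int; lra).
    rewrite <- (RInt_ChaslesR g1 a m tb) by (apply g1int; lra).
    rewrite (zero_int g1 0 a), (zero_int g1 m tb); try lra.
    - intros; apply g1out; lra.
    - intros; apply g1out; lra. }
  assert (HB : B = - RInt g2 m' d).
  { unfold B. rewrite <- (RInt_ChaslesR g2 0 m' tb) by (apply g2int; lra).
    rewrite <- (RInt_ChaslesR g2 m' d tb) by (apply g2int; lra).
    rewrite (zero_int g2 0 m'), (zero_int g2 d tb); try lra.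
    - intros; apply g2out; lra.
    - intros; apply g2out; lra. }
  assert (Apos : 0 < A).
  { rewrite HA. rewrite (RInt_extR g1 (fun t => (Ft tb f m - Ft tb f t) * ft tb f t)).
    2:{ intros t Ht. rewrite Rmin_left, Rmax_right in Ht by lra. rewrite g1in by lra.
        rewrite (F_eq tb F f H m), (F_eq tb F f H t), (f_eq tb F f H t) by (unfold inTheta, m, a in *; lra).
        reflexivity. }
    apply RInt_gt_0; [assumption| |].
    - intros t Ht. apply Rmult_lt_0_compat.
      + assert (Ft tb f t < Ft tb f m) by (apply (Ft_strict tb F f H); lra). lra.
      + apply (ft_pos tb F f H).
    - intros t _. apply continuity_pt_filterlim. apply continuity_pt_mult.
      + apply continuity_pt_minus. apply continuity_pt_const; intros ? ?; reflexivity.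
        apply continuity_pt_filterlim, (Ft_cont tb F f H).
      + apply continuity_pt_filterlim, (ft_cont tb F f H). }
  assert (Bpos : 0 < B).
  { rewrite HB.
    replace (- RInt g2 m' d) with (-1 * RInt g2 m' d) by ring.
    rewrite <- (RInt_scalR g2 (-1) m' d) by (apply g2int; lra).
    rewrite (RInt_extR (fun x => -1 * g2 x) (fun t => (Ft tb f t - Ft tb f m') * ft tb f t)).
    2:{ intros t Ht. rewrite Rmin_left, Rmax_right in Ht by lra. rewrite g2in by lra.
        rewrite (F_eq tb F f H m'), (F_eq tb F f H t), (f_eq tb F f H t) by (unfold inTheta, m', d in *; lra).
        ring. }
    apply RInt_gt_0; [assumption| |].
    - intros t Ht. apply Rmult_lt_0_compat.
      + assert (Ft tb f m' < Ft tb f t) by (apply (Ft_strict tb F f H); lra). lra.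
      + apply (ft_pos tb F f H).
    - intros t _. apply continuity_pt_filterlim. apply continuity_pt_mult.
      + apply continuity_pt_minus. apply continuity_pt_filterlim, (Ft_cont tb F f H).
        apply continuity_pt_const; intros ? ?; reflexivity.
      + apply continuity_pt_filterlim, (ft_cont tb F f H). }
  set (al := B / (A + B)). set (be := A / (A + B)).
  assert (Hal : 0 < al) by (unfold al; apply Rdiv_lt_0_compat; lra).
  assert (Hbe : 0 < be) by (unfold be; apply Rdiv_lt_0_compat; lra).
  assert (Hsum : al + be = 1) by (unfold al, be; field; lra).
  assert (Hbal : al * A = be * B) by (unfold al, be; field; lra).
  set (s := fun t => al * s1 t + be * s2 t).
  assert (Ns : nondec01 tb s).
  { destruct Ns1 as [N11 N12]. destruct Ns2 as [N21 N22]. split.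
    - intros t Ht. specialize (N11 t Ht). specialize (N21 t Ht). unfold s. nra.
    - intros u v Hu Huv Hv. specialize (N12 u v Hu Huv Hv). specialize (N22 u v Hu Huv Hv). unfold s. nra. }
  assert (sf_dec : forall z, 0 <= z <= tb -> intdF f s z tb = intdF f F z tb + al * RInt g1 z tb + be * RInt g2 z tb).
  { intros z Hz. unfold intdF.
    rewrite (RInt_extR (fun t => s t * f t) (fun t => al * (s1 t * f t) + be * (s2 t * f t))).
    2:{ intros; unfold s; ring. }
    rewrite RInt_plusR by (apply ex_RInt_scalR; apply (sf_int tb F f); (assumption || lra)).
    rewrite !RInt_scalR by (apply (sf_int tb F f); (assumption || lra)).
    unfold g1, g2. rewrite !RInt_minusR by (apply (sf_int tb F f); (assumption || lra)).
    repeat match goal with |- context [RInt ?g ?a ?b] => let x := fresh "x" in pose (x := (RInt g a b : R)); change (RInt g a b) with x; clearbody x end; replace be with (1 - al) by lra; ring. }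
  assert (HMPS : MPS tb f F s).
  { split.
    - intros z Hz. unfold inTheta in Hz. rewrite sf_dec by lra.
      assert (P_le : RInt g1 z tb <= A).
      { unfold A. rewrite <- (RInt_ChaslesR g1 0 z tb) by (apply g1int; lra).
        assert (0 <= RInt g1 0 z).
        { apply RInt_ge_0; [lra| apply g1int; lra |]. intros; apply g1pos; lra. }
        lra. }
      assert (Q_le : RInt g2 z tb <= 0).
      { assert (h := int_le_const g2 0 z tb ltac:(lra) ltac:(apply g2int; lra)
          ltac:(intros; apply g2neg; lra)). lra. }
      destruct (Rle_dec z m') as [hz|hz].
      + assert (Q_eq : RInt g2 z tb = - B).
        { unfold B. rewrite <- (RInt_ChaslesR g2 0 z tb) by (apply g2int; lra).
          rewrite (zero_int g2 0 z) by (lra || (intros; apply g2out; lra)). lra. }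
        rewrite Q_eq. nra.
      + assert (P_eq : RInt g1 z tb = 0).
        { apply zero_int; [lra|]. intros; apply g1out; lra. }
        rewrite P_eq. nra.
    - rewrite sf_dec by lra. fold A. replace (RInt g2 0 tb) with (- B) by (unfold B; ring). nra. }
  assert (HS0 : S0 tb F f s) by (split; assumption).
  specialize (HC s HS0).
  rewrite !(Rev0_eq tb F f _ H) in HC.
  assert (IsG : forall s0, nondec01 tb s0 -> ex_RInt (fun t => s0 t * Gt tb f t) 0 tb).
  { intros s0 Hs0. apply (sG_int tb F f); (assumption || lra). }
  rewrite (RInt_extR (fun t => s t * Gt tb f t) (fun t => al * (s1 t * Gt tb f t) + be * (s2 t * Gt tb f t))) in HC.
  2:{ intros; unfold s; ring. }
  rewrite RInt_plusR in HC by (apply ex_RInt_scalR; apply IsG; assumption).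
  rewrite !RInt_scalR in HC by (apply IsG; assumption).
  assert (Hh1 : (Jv F f x - eta) * A <= RInt (fun t => s1 t * Gt tb f t) 0 tb - RInt (fun t => F t * Gt tb f t) 0 tb).
  { rewrite <- RInt_minusR by (apply IsG; assumption).
    unfold A. rewrite <- RInt_scalR by (apply g1int; lra).
    apply RInt_le; [lra| apply ex_RInt_scalR, g1int; lra | apply ex_RInt_minusR; apply IsG; assumption |].
    intros t Ht. rewrite <- (JG_eq tb F f H t) by (unfold inTheta; lra).
    replace (s1 t * (Jv F f t * f t) - F t * (Jv F f t * f t)) with (Jv F f t * g1 t) by (unfold g1; ring).
    destruct (Rlt_dec t a); [rewrite g1out by lra; lra|].
    destruct (Rlt_dec m t); [rewrite g1out by lra; lra|].
    apply Rmult_le_compat_r; [apply g1pos; lra| apply Ja; lra]. }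
  assert (Hh2 : (Jv F f y + eta) * (- B) <= RInt (fun t => s2 t * Gt tb f t) 0 tb - RInt (fun t => F t * Gt tb f t) 0 tb).
  { rewrite <- RInt_minusR by (apply IsG; assumption).
    unfold B. rewrite Ropp_involutive.
    rewrite <- RInt_scalR by (apply g2int; lra).
    apply RInt_le; [lra| apply ex_RInt_scalR, g2int; lra | apply ex_RInt_minusR; apply IsG; assumption |].
    intros t Ht. rewrite <- (JG_eq tb F f H t) by (unfold inTheta; lra).
    replace (s2 t * (Jv F f t * f t) - F t * (Jv F f t * f t)) with (Jv F f t * g2 t) by (unfold g2; ring).
    destruct (Rlt_dec t m'); [rewrite g2out by lra; lra|].
    destruct (Rlt_dec d t); [rewrite g2out by lra; lra|].
    assert (g2 t <= 0) by (apply g2neg; lra). assert (Jv F f t <= Jv F f y + eta) by (apply Jd; lra).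
    nra. }
  revert HC Hh1 Hh2.
  generalize (RInt (fun t => s1 t * Gt tb f t) 0 tb) (RInt (fun t => s2 t * Gt tb f t) 0 tb)
    (RInt (fun t => F t * Gt tb f t) 0 tb). intros I1 I2 I0 HC Hh1 Hh2.
  assert (al * A * eta > 0) by (apply Rmult_gt_0_compat; [apply Rmult_gt_0_compat|]; lra).
  assert (Hfin : al * I1 + be * I2 - I0 >= al * A * eta).
  { replace (al * I1 + be * I2 - I0) with (al * (I1 - I0) + be * (I2 - I0)) by (replace be with (1 - al) by lra; ring).
    assert (al * (I1 - I0) >= al * ((Jv F f x - eta) * A)) by nra.
    assert (be * (I2 - I0) >= be * ((Jv F f y + eta) * - B)) by nra.
    assert (Jv F f x - Jv F f y = 3 * eta) by (unfold eta; field).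
    assert (E : al * ((Jv F f x - eta) * A) + be * ((Jv F f y + eta) * - B) = (al * A) * (Jv F f x - Jv F f y - 2 * eta)).
    { replace (be * ((Jv F f y + eta) * - B)) with (- (Jv F f y + eta) * (be * B)) by ring.
      rewrite <- Hbal. ring. }
    replace (Jv F f x - Jv F f y - 2 * eta) with eta in E by lra.
    lra. }
  lra.
Qed.

Theorem mainTheorem11 (tb : R) (F f : R -> R)
  (Htb : 0 < tb)
  (Hfcont : forall x, inTheta tb x ->
     filterlim f (within (inTheta tb) (locally x)) (locally (f x)))
  (Hfpos : forall x, inTheta tb x -> 0 < f x)
  (HF : forall x, inTheta tb x -> F x = RInt f 0 x)
  (HF1 : F tb = 1) :
  ((forall x y, 0 <= x -> x <= y -> y <= tb -> Jv F f x <= Jv F f y) <->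
   (forall s sh, nondec01 tb s -> nondec01 tb sh -> MPS tb f s sh ->
      Rev0 tb F f s >= Rev0 tb F f sh)) /\
  ((forall x y, 0 <= x -> x <= y -> y <= tb -> Jv F f x <= Jv F f y) <->
   (S0 tb F f F /\ forall s, S0 tb F f s -> Rev0 tb F f s <= Rev0 tb F f F)).
Proof.
  assert (H : Hyp tb F f) by (repeat split; assumption).
  assert (NF : nondec01 tb F) by apply (F_nondec tb F f H).
  assert (SF : S0 tb F f F) by (split; [assumption| split; [intros; lra | reflexivity]]).
  split; split.
  - intros HJ s sh Hs Hsh HM. apply (AB tb F f H HJ s sh Hs Hsh HM).
  - intros HB. apply (CA tb F f H). intros s [Hs HM].
    apply Rge_le. apply HB; assumption.
  - intros HJ. split; [assumption|]. intros s [Hs HM].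
    apply Rge_le. apply (AB tb F f H HJ F s NF Hs HM).
  - intros [_ HC]. apply (CA tb F f H HC).
Qed.
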